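(* Let $M$ be a finitely presented $n$-parameter persistence module. For all $j\geq1$, if $\vec s\in\xi_{j+1}(M)$ then there exist $\vec r_i\in\xi_j(M)$ such that $\vec s=\bigvee_i\vec r_i$. Consequently, for each coordinate $k\in\{1,\dots,n\}$ the set of $k$-th coordinates of points of $\bigcup_i\xi_i(M)$ equals the set of $k$-th coordinates of points of $\xi_0(M)\cup\xi_1(M)$; i.e. the multiparameter Betti grid of $M$ is determined by $\xi_0(M)\cup\xi_1(M)$.
   Context: Modules are $\mathbb{R}^n$-graded modules over $P_n$, the monoid ring over a field $\mathbb{F}$ of $([0,\infty)^n,+)$; finitely presented means a quotient of a finitely generated free graded module by a finitely generated homogeneous submodule. Let $I\subset P_n$ be the ideal generated by the monomials $\vec x^{\vec a}$, $\vec a\neq0$. $\xi_i(M)(\vec a)=\dim_{\mathbb F}\mathrm{Tor}_i^{P_n}(M,P_n/I)_{\vec a}$, and $\xi_i(M)$ is identified with its support, i.e. the set of grades of generators of the $i$-th term of a minimal free resolution of $M$. $\vee$ denotes the join (coordinatewise maximum) in $\mathbb{R}^n$. The multiparameter Betti grid of $M$ is the product over coordinates $k$ of the sets of distinct $k$-th coordinates of points of $\bigcup_i\xi_i(M)$. *)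

(* Defs.v *)
From HB Require Import structures.
From mathcomp Require Import all_boot all_order all_algebra.
From mathcomp Require Import reals.
Set Implicit Arguments. Unset Strict Implicit. Unset Printing Implicit Defensive.
Import Order.TTheory GRing.Theory Num.Theory.
Local Open Scope ring_scope.

Section Grades.
Variables (R : realType) (n : nat).

Definition leqv (x y : 'rV[R]_n) : bool := [forall k : 'I_n, x 0 k <= y 0 k].

Definition joinv (x y : 'rV[R]_n) : 'rV[R]_n := \row_k Num.max (x 0 k) (y 0 k).

Definition bigjoinv (x0 : 'rV[R]_n) (xs : seq 'rV[R]_n) : 'rV[R]_n :=
  foldr joinv x0 xs.
End Grades.

(* A finitely generated free R^n-graded P_n-module is  (+)_j P_n(-g_j);
   it is described by the finite list of grades g : 'I_m -> R^n of its basis.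
   Its component at grade a is the F-vector space of column vectors
   supported on the basis elements j with g_j <= a, and all structure maps
   are inclusions.  A homogeneous map  (+)_j P_n(-g_j) -> (+)_i P_n(-h_i)
   is a matrix D over F with D i j = coefficient of x^(g_j - h_i), so
   D i j != 0 -> h_i <= g_j; its component at grade a is v |-> D *m v. *)
Section Resolutions.
Variables (F : fieldType) (R : realType) (n : nat).

Definition supported_in (m : nat) (g : 'I_m -> 'rV[R]_n) (a : 'rV[R]_n)
  (v : 'cV[F]_m) : Prop :=
  forall j : 'I_m, ~~ leqv (g j) a -> v j 0 = 0.

(* A minimal free resolution  ... -> F_2 -d_2-> F_1 -d_1-> F_0  (-> M -> 0),
   where F_i has rank r i and basis grades g i, and
   d i : 'M_(r i, r i.+1) is the differential F_{i+1} -> F_i.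
   The resolved module is M = coker (d 0). *)
Definition is_minimal_free_resolution (r : nat -> nat)
  (g : forall i, 'I_(r i) -> 'rV[R]_n)
  (d : forall i, 'M[F]_(r i, r i.+1)) : Prop :=
  (forall i (p : 'I_(r i)) (q : 'I_(r i.+1)),
      d i p q != 0 -> leqv (g i p) (g i.+1 q)) /\
  (forall i (a : 'rV[R]_n) (v : 'cV[F]_(r i.+1)),
      supported_in (g i.+1) a v ->
      (d i *m v = 0 <->
       exists w : 'cV[F]_(r i.+2), supported_in (g i.+2) a w /\ d i.+1 *m w = v)) /\
  (* minimality: im d_{i+1} is contained in I F_i, i.e. no nonzero entry
     is a constant (degree-0) monomial *)
  (forall i (p : 'I_(r i)) (q : 'I_(r i.+1)),
      d i p q != 0 -> g i p != g i.+1 q).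

Definition xi (r : nat -> nat) (g : forall i, 'I_(r i) -> 'rV[R]_n) (i : nat)
  (s : 'rV[R]_n) : Prop := exists p : 'I_(r i), g i p = s.
End Resolutions.

(* Main.v *)
Require Import Defs.
From HB Require Import structures.
From mathcomp Require Import all_boot all_order all_algebra.
From mathcomp Require Import reals.
Import Order.TTheory GRing.Theory Num.Theory.
Local Open Scope ring_scope.

Section Aux.
Variables (R : realType) (n : nat).

Lemma leqv_refl (x : 'rV[R]_n) : leqv x x.
Proof. by apply/forallP => k. Qed.

Lemma leqv_trans (x y z : 'rV[R]_n) : leqv x y -> leqv y z -> leqv x z.
Proof.
move=> /forallP H1 /forallP H2; apply/forallP => k; exact: le_trans (H1 k) (H2 k).
Qed.

Lemma leqv_anti (x y : 'rV[R]_n) : leqv x y -> leqv y x -> x = y.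
Proof.
move=> /forallP H1 /forallP H2; apply/rowP => k; apply/le_anti.
by rewrite H1 H2.
Qed.

Lemma le_bigjoin (r0 : 'rV[R]_n) rs x :
  x \in r0 :: rs -> leqv x (bigjoinv r0 rs).
Proof.
elim: rs => [|y rs IH] /=.
  by rewrite inE => /eqP ->; apply: leqv_refl.
move=> Hx; apply/forallP => k; rewrite /joinv mxE le_max.
have [->|Hxy] := eqVneq x y; first by rewrite lexx.
have {}Hx : x \in r0 :: rs.
  by move: Hx; rewrite !inE (negbTE Hxy) /=.
have /forallP := IH Hx => /(_ k) ->; by rewrite orbT.
Qed.

Lemma bigjoin_le (r0 : 'rV[R]_n) rs s :
  leqv r0 s -> (forall x, x \in rs -> leqv x s) -> leqv (bigjoinv r0 rs) s.
Proof.
move=> H0; elim: rs => [|y rs IH] //= Hall.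
have /forallP Hy := Hall y (mem_head _ _).
have /forallP Hr : leqv (bigjoinv r0 rs) s.
  by apply: IH => x Hx; apply: Hall; rewrite inE Hx orbT.
apply/forallP => k; rewrite /joinv mxE ge_max.
by rewrite Hy Hr.
Qed.

Lemma bigjoin_coord (r0 : 'rV[R]_n) rs k :
  exists x, x \in r0 :: rs /\ bigjoinv r0 rs 0 k = x 0 k.
Proof.
elim: rs => [|y rs [x [Hx Hk]]] /=; first by exists r0; rewrite mem_head.
rewrite /joinv mxE maxEle.
case: ifP => _.
  by exists x; split => //; move: Hx; rewrite !inE => /orP [->|->]; rewrite ?orbT.
by exists y; rewrite !inE eqxx orbT.
Qed.
End Aux.
Arguments leqv_refl {R n}. Arguments leqv_trans {R n x y z}. Arguments leqv_anti {R n x y}.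
Arguments le_bigjoin {R n r0 rs x}. Arguments bigjoin_le {R n r0 rs s}. Arguments bigjoin_coord {R n}.

Section Main.
Variables (F : fieldType) (R : realType) (n : nat)
  (r : nat -> nat) (g : forall i, 'I_(r i) -> 'rV[R]_n)
  (d : forall i, 'M[F]_(r i, r i.+1)).
Hypothesis H : is_minimal_free_resolution g d.

Lemma noconst i (q : 'I_(r i.+1)) a (z : 'cV[F]_(r i.+2)) :
  supported_in (g i.+2) a z -> leqv a (g i.+1 q) -> (d i.+1 *m z) q 0 = 0.
Proof.
case: H => Hhom [Hex Hmin] Hz Ha.
rewrite mxE; apply: big1 => q' _.
have [Hd|Hd] := eqVneq (d i.+1 q q') 0; first by rewrite Hd mul0r.
case Hl: (leqv (g i.+2 q') a); last by rewrite Hz ?Hl // mulr0.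
have E := leqv_anti (Hhom _ _ _ Hd) (leqv_trans Hl Ha).
by move: (Hmin _ _ _ Hd); rewrite E eqxx.
Qed.

Lemma delta_supp i (q : 'I_(r i)) :
  supported_in (g i) (g i q) (delta_mx q 0 : 'cV[F]_(r i)).
Proof.
move=> j Hj; rewrite mxE; case: eqVneq Hj => [->|//]; by rewrite leqv_refl.
Qed.

Lemma part1 i q :
  exists (r0 : 'rV[R]_n) (rs : seq 'rV[R]_n),
    xi g i.+1 r0 /\ (forall x, x \in rs -> xi g i.+1 x) /\
    g i.+2 q = bigjoinv r0 rs.
Proof.
have H' := H; case: H' => Hhom [Hex Hmin].
set s := g i.+2 q.
set e : 'cV[F]_(r i.+2) := delta_mx q 0.
set c := d i.+1 *m e.
have ce p : c p 0 = d i.+1 p q by rewrite /c /e -colE mxE.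
have eq1 : e q 0 = 1 by rewrite mxE !eqxx.
have [p0 Hp0] : exists p0, c p0 0 != 0.
  case: (pickP (fun p => c p 0 != 0)) => [p0 Hp0|Hn]; first by exists p0.
  have c0 : c = 0 by apply/matrixP => p j; rewrite (ord1 j); have := Hn p; rewrite /= => /negbFE/eqP ->; by rewrite mxE.
  have [w [Hw Hdw]] := (proj1 (Hex i.+1 s e (delta_supp _ q))) c0.
  have := noconst _ q _ _ Hw (leqv_refl _).
  by rewrite Hdw eq1 => /eqP; rewrite oner_eq0.
set P := [seq p <- enum 'I_(r i.+1) | c p 0 != 0].
exists (g i.+1 p0), (map (g i.+1) P).
split; first by exists p0.
split; first by move=> x /mapP [p _ ->]; exists p.
set u := bigjoinv _ _.
have Hus : leqv u s.
  apply: bigjoin_le; first by apply: Hhom; rewrite -ce.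
  by move=> x /mapP [p]; rewrite mem_filter => /andP [Hp _] ->; apply: Hhom; rewrite -ce.
have csupp : supported_in (g i.+1) u c.
  move=> p Hp; apply/eqP; apply/negP => /negP Hc; move/negP: Hp; apply.
  apply: le_bigjoin; rewrite inE; apply/orP; right; apply/mapP; exists p => //.
  by rewrite mem_filter Hc mem_enum.
have csupps : supported_in (g i.+1) s c.
  move=> p Hp; apply/eqP; rewrite -[_ == _]negbK; apply/negP => Hc.
  move/negP: Hp; apply; rewrite /s; apply: Hhom; by rewrite -ce.
have dc0 : d i *m c = 0.
  by apply/(Hex i s c csupps); exists e; split => //; apply: delta_supp.
have [w [Hw Hdw]] := (proj1 (Hex i u c csupp)) dc0.
apply: leqv_anti => //.
case Hsu: (leqv s u) => //.
have wq : w q 0 = 0 by apply: Hw; rewrite Hsu.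
have Hsupp : supported_in (g i.+2) s (e - w).
  move=> j Hj; rewrite !mxE.
  have -> : w j 0 = 0.
    apply: Hw; apply/negP => Hju; move/negP: Hj; apply; exact: leqv_trans Hju Hus.
  case: eqVneq Hj => [->|_ _]; last by rewrite subr0. by rewrite /s leqv_refl.
have Hk : d i.+1 *m (e - w) = 0 by rewrite mulmxBr Hdw subrr.
have [z [Hz Hdz]] := (proj1 (Hex i.+1 s _ Hsupp)) Hk.
have := noconst _ q _ _ Hz (leqv_refl _).
rewrite Hdz !mxE /= eqxx /=.
have -> : w q 0 = 0 by [].
by rewrite subr0 => /eqP; rewrite oner_eq0.
Qed.

Lemma part2 k j s : xi g j.+1 s ->
  exists s' : 'rV[R]_n, (xi g 0 s' \/ xi g 1 s') /\ s' 0 k = s 0 k.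
Proof.
elim: j s => [|j IH] s Hs; first by exists s; split => //; right.
case: Hs => q <-.
have [r0 [rs [H0 [Hrs ->]]]] := part1 j q.
have [x [Hx ->]] := bigjoin_coord r0 rs k.
apply: IH; move: Hx; rewrite inE => /orP [/eqP ->//|]; exact: Hrs.
Qed.
End Main.

Theorem mainTheorem4 (F : fieldType) (R : realType) (n : nat)
  (r : nat -> nat) (g : forall i, 'I_(r i) -> 'rV[R]_n)
  (d : forall i, 'M[F]_(r i, r i.+1)) :
  is_minimal_free_resolution g d ->
  (forall (j : nat) (s : 'rV[R]_n), (1 <= j)%N -> xi g j.+1 s ->
     exists (r0 : 'rV[R]_n) (rs : seq 'rV[R]_n),
       xi g j r0 /\ (forall x, x \in rs -> xi g j x) /\ s = bigjoinv r0 rs) /\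
  (forall (k : 'I_n) (x : R),
     (exists (i : nat) (s : 'rV[R]_n), xi g i s /\ s 0 k = x) <->
     (exists s : 'rV[R]_n, (xi g 0 s \/ xi g 1 s) /\ s 0 k = x)).
Proof.
move=> H; split.
  move=> [|j] s //= _ [q <-]; exact: @part1 _ _ _ _ _ _ H j q.
move=> k x; split.
  case=> [[|i]] [s [Hs <-]]; first by exists s; split => //; left.
  exact: @part2 _ _ _ _ _ _ H k _ _ Hs.
by case=> s [[Hs|Hs] Hk]; [exists 0%N | exists 1%N]; exists s.
Qed.
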